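(* Let $R=\bigoplus_{s\in S}R_s$ be an $S$-graded ring inducing $S$, where $S$ is cancellative. Then $R$ is graded von Neumann regular if and only if for every $x\in H_R$ there exists $y\in H_R$ such that $x=xyx$.
   Context: Rings are associative, not necessarily unital. Let $S$ be a partial groupoid (set with partial binary operation) and $R$ a ring with additive subgroups $R_s$ ($s\in S$) such that $R=\bigoplus_{s\in S}R_s$, $R_sR_t\subseteq R_{st}$ whenever $st$ is defined, and $R_sR_t\neq 0$ implies $st$ is defined; $R$ is then called an $S$-graded ring inducing $S$. Convention: $S$ contains an element $0$ with $R_0=0$, $S\setminus\{0\}=\{s: R_s\neq 0\}$, and $S$ is made a groupoid by setting $st=0$ when $st$ is undefined and $s0=0s=0$. $H_R=\bigcup_{s\in S}R_s$ is the set of homogeneous elements. $S$ is cancellative if for $s,t,u\in S$ each of $0\neq su=tu$ and $0\neq us=ut$ implies $s=t$. $R$ is graded von Neumann regular if $x\in xRx$ for every $x\in H_R$. *)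

(* Defs.v *)
(* Rings are associative, not necessarily unital: the additive
   group is a zmodType and the multiplication is an explicit associative,
   biadditive operation (no unit required). *)
From mathcomp Require Import all_boot all_algebra.
Set Implicit Arguments. Unset Strict Implicit. Unset Printing Implicit Defensive.
Import GRing.Theory.
Local Open Scope ring_scope.

Definition nu_ring (R : zmodType) (mul : R -> R -> R) : Prop :=
  associative mul /\ left_distributive mul +%R /\ right_distributive mul +%R.

Definition add_subgroup (R : zmodType) (A : R -> Prop) : Prop :=
  A 0 /\ forall x y, A x -> A y -> A (x - y).

(* S-graded ring inducing S, with the paper's convention: S carries a total
   binary operation [op] and a distinguished element [z] (the "0" of S) with
   s z = z s = z, R_z = 0, R_s <> 0 for s <> z, and R_s R_t ⊆ R_(st)
   (for st undefined in the original partial groupoid, st = z).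
   R = ⊕_s R_s is an internal direct sum: every element is a finite sum of
   homogeneous elements, and homogeneous components of pairwise distinct
   degrees summing to 0 are all 0. *)
Definition graded_ring_inducing (R : zmodType) (mul : R -> R -> R)
  (S : Type) (op : S -> S -> S) (z : S) (Rs : S -> R -> Prop) : Prop :=
  nu_ring mul /\
  (forall s, add_subgroup (Rs s)) /\
      (forall x, exists n (d : 'I_n -> S) (r : 'I_n -> R),
          (forall i, Rs (d i) (r i)) /\ x = \sum_(i < n) r i) /\
      (forall n (d : 'I_n -> S) (r : 'I_n -> R),
          injective d -> (forall i, Rs (d i) (r i)) ->
          \sum_(i < n) r i = 0 -> forall i, r i = 0) /\
      (forall s t a b, Rs s a -> Rs t b -> Rs (op s t) (mul a b)) /\
      (forall s, op s z = z /\ op z s = z) /\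
      (forall x, Rs z x -> x = 0) /\
      (forall s, s <> z -> exists x, Rs s x /\ x <> 0).

Definition homogeneous (R : zmodType) (S : Type) (Rs : S -> R -> Prop) (x : R) : Prop :=
  exists s, Rs s x.

Definition cancellative (S : Type) (op : S -> S -> S) (z : S) : Prop :=
  forall s t u, (op s u <> z -> op s u = op t u -> s = t) /\
                (op u s <> z -> op u s = op u t -> s = t).

Definition graded_vN_regular (R : zmodType) (mul : R -> R -> R)
  (S : Type) (Rs : S -> R -> Prop) : Prop :=
  forall x, homogeneous Rs x -> exists r, x = mul (mul x r) x.

(* Main.v *)
Require Import Defs.
From mathcomp Require Import all_boot all_algebra.
From Stdlib Require Import ClassicalEpsilon.
Set Implicit Arguments. Unset Strict Implicit. Unset Printing Implicit Defensive.
Import GRing.Theory.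
Local Open Scope ring_scope.

Lemma rs_neg (R : zmodType) (A : R -> Prop) x :
  add_subgroup A -> A x -> A (- x).
Proof. by move=> [h0 hs] hx; have := hs 0 x h0 hx; rewrite sub0r. Qed.

Lemma rs_add (R : zmodType) (A : R -> Prop) x y :
  add_subgroup A -> A x -> A y -> A (x + y).
Proof. by move=> H hx hy; rewrite -(opprK y); apply: H.2 => //; apply: rs_neg. Qed.

Fixpoint homL (R : zmodType) (S : Type) (Rs : S -> R -> Prop) (l : seq (S * R)) : Prop :=
  match l with [::] => True | p :: l => Rs p.1 p.2 /\ homL Rs l end.

Fixpoint uniqL (R : zmodType) (S : Type) (e : S -> S -> bool) (l : seq (S * R)) : bool :=
  if l is p :: l then all (fun q => ~~ e q.1 p.1) l && uniqL e l else true.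

Definition sumL (R : zmodType) (S : Type) (l : seq (S * R)) : R := \sum_(p <- l) p.2.
Definition sumdeg (R : zmodType) (S : Type) (e : S -> S -> bool) u (l : seq (S * R)) : R :=
  \sum_(p <- l | e p.1 u) p.2.

Lemma hom_sumdeg (R : zmodType) (S : Type) (Rs : S -> R -> Prop) e u l :
  (forall s, add_subgroup (Rs s)) -> (forall a b, reflect (a = b) (e a b)) ->
  homL Rs l -> Rs u (sumdeg e u l).
Proof.
move=> sub eP; elim: l => [|p l IH] /=; first by rewrite /sumdeg big_nil; by case: (sub u).
move=> [hp hl]; rewrite /sumdeg big_cons; case: eP => [E|_]; last exact: (IH hl).
have := IH hl; rewrite /sumdeg -E => h; exact: rs_add.
Qed.

Lemma hom_filter (R : zmodType) (S : Type) (Rs : S -> R -> Prop) P l :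
  homL Rs l -> homL Rs (filter P l).
Proof. by elim: l => //= p l IH [hp hl]; case: (P p) => /=; auto. Qed.

Lemma all_filter' (T : Type) (a P : pred T) l : all a l -> all a (filter P l).
Proof. by elim: l => //= q l IH /andP[aq al]; case: (P q) => /=; rewrite ?aq IH. Qed.

Lemma uniq_filter (R : zmodType) (S : Type) e P (l : seq (S * R)) :
  uniqL e l -> uniqL e (filter P l).
Proof.
elim: l => //= p l IH /andP[ha hu]; case: (P p) => /=; last exact: IH.
by rewrite all_filter' // IH.
Qed.

Lemma group (R : zmodType) (S : Type) (Rs : S -> R -> Prop) e :
  (forall s, add_subgroup (Rs s)) -> (forall a b, reflect (a = b) (e a b)) ->
  forall l, homL Rs l -> exists l', [/\ homL Rs l', uniqL e l', sumL l' = sumL l &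
     forall u, sumdeg e u l' = sumdeg e u l].
Proof.
move=> sub eP; elim => [|[a v] l IH] /=; first by exists [::].
move=> [hav hl]; have [l' [H1 H2 H3 H4]] := IH hl.
exists ((a, v + sumdeg e a l') :: filter (fun p => ~~ e p.1 a) l'); split => /=.
- split; last exact: hom_filter.
  by apply: rs_add => //; apply: hom_sumdeg.
- by rewrite filter_all uniq_filter.
- rewrite /sumL !big_cons /=.
  have -> : \sum_(p <- l) p.2 = sumL l' by rewrite H3.
  rewrite /sumL [in RHS](bigID (fun p : S * R => e p.1 a)) big_filter /=.
  by rewrite addrA.
- move=> u; rewrite /sumdeg !big_cons /= big_filter_cond.
  case: (eP a u) => [<-|ne].
    have -> : \sum_(p <- l' | ~~ e p.1 a && e p.1 a) p.2 = 0.
      by apply: big1 => p /andP[/negbTE ->].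
    by rewrite addr0; have := H4 a; rewrite /sumdeg => ->.
  have := H4 u; rewrite /sumdeg => <-; apply: eq_bigl => p.
  case: (eP p.1 u) => [->|]; rewrite ?andbT ?andbF //.
  by apply/negP => /eP h; apply: ne.
Qed.

Lemma uniq_nth (R : zmodType) (S : Type) (e : S -> S -> bool) z (l : seq (S * R)) :
  (forall a b, reflect (a = b) (e a b)) -> uniqL e l ->
  forall i j, (i < size l)%N -> (j < size l)%N ->
  (nth (z, 0) l i).1 = (nth (z, 0) l j).1 -> i = j.
Proof.
move=> eP; elim: l => //= p l IH /andP[ha hu] [|i] [|j] //= hi hj.
- move=> h; have := (all_nthP (z,0) ha) j hj; by rewrite -h; case: eP.
- move=> h; have := (all_nthP (z,0) ha) i hi; by rewrite h; case: eP.
- by move=> h; congr _.+1; apply: IH.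
Qed.

Lemma homL_nth (R : zmodType) (S : Type) (Rs : S -> R -> Prop) z l :
  Rs z 0 -> homL Rs l -> forall i, Rs (nth (z, 0) l i).1 (nth (z, 0) l i).2.
Proof.
move=> h0; elim: l => [|p l IH] /= hl i; first by rewrite nth_nil.
by case: hl => hp hl; case: i => //= i; apply: IH.
Qed.

Lemma homL_map (R : zmodType) (S : Type) (Rs : S -> R -> Prop) (I : Type) (f : I -> S * R) s :
  (forall i, Rs (f i).1 (f i).2) -> homL Rs (map f s).
Proof. by move=> h; elim: s => //= i s IH; split. Qed.

Theorem proposition4p2 (R : zmodType) (mul : R -> R -> R)
  (S : Type) (op : S -> S -> S) (z : S) (Rs : S -> R -> Prop) :
  graded_ring_inducing mul op z Rs -> cancellative op z ->
  (graded_vN_regular mul Rs <->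
   forall x, homogeneous Rs x ->
     exists y, homogeneous Rs y /\ x = mul (mul x y) x).
Proof.
move=> [[assoc [ld rd]] [sub [dec [dsum [homul [zs [z0 nz]]]]]]] canc.
split; last first.
  by move=> H x hx; have [y [_ hy]] := H x hx; exists y.
move=> H x hx; have [s xs] := hx; have [r xr] := H x hx.
have [n [d [rr [rrh rdef]]]] := dec r.
pose e (a b : S) := if excluded_middle_informative (a = b) then true else false.
have eP : forall a b : S, reflect (a = b) (e a b).
  by move=> a b; rewrite /e; case: excluded_middle_informative => h; constructor.
have mul0l : forall a, mul 0 a = 0.
  move=> a; have := ld 0 0 a; rewrite addr0 => /(congr1 (fun w => w - mul 0 a)).
  by rewrite subrr addrK.
have mul0r : forall a, mul a 0 = 0.
  move=> a; have := rd a 0 0; rewrite addr0 => /(congr1 (fun w => w - mul a 0)).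
  by rewrite subrr addrK.
have mul_suml : forall a (I : Type) (l : seq I) (P : pred I) (F : I -> R),
    mul (\sum_(i <- l | P i) F i) a = \sum_(i <- l | P i) mul (F i) a.
  by move=> a I l P F; apply: (big_morph (fun b => mul b a) (fun u v => ld u v a) (mul0l a)).
have mul_sumr : forall a (I : Type) (l : seq I) (P : pred I) (F : I -> R),
    mul a (\sum_(i <- l | P i) F i) = \sum_(i <- l | P i) mul a (F i).
  by move=> a I l P F; apply: (big_morph (fun b => mul a b) (fun u v => rd a u v) (mul0r a)).
case: (excluded_middle_informative (s = z)) => [sz|snz].
  have x0 : x = 0 by apply: z0; rewrite -sz.
  exists 0; split; first by exists z; by case: (sub z).
  by rewrite x0 !mul0l.
pose P := fun i : 'I_n => e (op (op s (d i)) s) s.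
have Pd : forall i j, P i -> P j -> d i = d j.
  move=> i j /eP hi /eP hj.
  have h1 : op s (d i) = op s (d j).
    apply: (canc _ _ s).1; first by rewrite hi.
    by rewrite hi hj.
  have h2 : op s (d i) <> z by move=> h; apply: snz; rewrite -hi h (zs s).2.
  exact: (canc _ _ s).2.
exists (\sum_(i < n | P i) rr i); split.
  case: (excluded_middle_informative (exists i, P i)) => [[i0 Pi0]|nP].
    exists (d i0); apply: (big_ind (Rs (d i0))); first by case: (sub (d i0)).
      by move=> u v; apply: rs_add.
    by move=> i Pi; rewrite (Pd i0 i Pi0 Pi).
  exists s; apply: (big_ind (Rs s)); first by case: (sub s).
    by move=> u v; apply: rs_add.
  by move=> i Pi; case: nP; exists i.
pose f := fun i : 'I_n => (op (op s (d i)) s, - mul (mul x (rr i)) x).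
pose L := (s, x) :: map f (enum 'I_n).
have hL : homL Rs L.
  split => //; apply: homL_map => i /=; apply: rs_neg => //.
  exact: (homul _ _ _ _ (homul _ _ _ _ xs (rrh i)) xs).
have sL : sumL L = 0.
  rewrite /sumL big_cons big_map big_enum /= sumrN.
  rewrite -mul_suml -mul_sumr -rdef -xr subrr //.
have [l' [H1 H2 H3 H4]] := group sub eP hL.
have hz : Rs z 0 by by case: (sub z).
have zl : sumdeg e s l' = 0.
  pose dd := fun i : 'I_(size l') => (nth (z, 0) l' i).1.
  pose r' := fun i : 'I_(size l') => (nth (z, 0) l' i).2.
  have inj : injective dd.
    move=> i j /(uniq_nth eP H2 (ltn_ord i) (ltn_ord j)) h; exact: val_inj.
  have hom : forall i, Rs (dd i) (r' i) by move=> i; apply: homL_nth.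
  have sm : \sum_(i < size l') r' i = 0.
    by move: H3; rewrite sL /sumL (big_nth (z, 0)) big_mkord.
  have := dsum _ dd r' inj hom sm => allz.
  rewrite /sumdeg (big_nth (z, 0)) big_mkord big1 // => i _; exact: allz.
move: zl; rewrite H4 /sumdeg big_cons /=.
try (case: (eP s s) => // _).
rewrite big_map big_enum_cond /= sumrN => /subr0_eq hx0.
by rewrite mul_sumr mul_suml {1}hx0.
Qed.
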